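(* Consider a CMILS instance and let $x$ satisfy $x_{s,i}\in[0,1]$ for all $i\in[N]$, $s\in[r_i]$, and $\sum_{s\in[r_i]}x_{s,i}=1$ for every $i\in[N]$. For every interval $(a,b]$ over $[T]$ define $$R_{a,b}:=\sum_{i\in[N]:\ r_i\in(a,b]}\max\Big\{1-\tfrac52x_{[a],i},\,0\Big\}d_i .$$ Let $y^*\in\{0,1\}^T$ and $S^*=\{s\in[T]:y^*_s=1\}$. If $C(S^*\cap(a,b])\ge R_{a,b}$ for every interval $(a,b]$ over $[T]$, then there exists $x^*$ such that $(x^*,y^* )$ is a feasible solution to the CMILS instance and $\mathrm{hcost}(x^* )\le\frac52\,\mathrm{hcost}(x)$.
   Context: CMILS problem: periods $[T]$, items $[N]$; item $i$ has demand $d_i>0$ due by time $r_i\in[T]$; period $s$ has ordering cost $K_s>0$ and capacity $C_s>0$; $h_i(s)\ge0$ ($s\in[r_i]$) is the per-unit holding cost of item $i$ from $s$ to $r_i$, non-increasing in $s$ with $h_i(r_i)=0$. A feasible solution is $(x,y)$ with $y\in\{0,1\}^T$, $x_{s,i}\in[0,1]$ ($i\in[N]$, $s\in[r_i]$), $\sum_{s\in[r_i]}x_{s,i}=1$ for every $i$, $x_{s,i}\le y_s$, and $\sum_{i: r_i\ge s}x_{s,i}d_i\le y_sC_s$ for every $s$. Notation: $x_{s,i}=0$ for $s>r_i$; $x_{S,i}=\sum_{s\in S}x_{s,i}$ for $S\subseteq[T]$; $[a]=\{1,\dots,a\}$ ($[0]=\emptyset$); $(a,b]=\{a+1,\dots,b\}$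 and an interval over $[T]$ is $(a,b]$ with integers $0\le a<b\le T$; $C(S)=\sum_{s\in S}C_s$; $\mathrm{hcost}(x)=\sum_{i\in[N]}d_i\sum_{s\in[r_i]}x_{s,i}h_i(s)$. *)

(* Defs.v *)
From HB Require Import structures.
From mathcomp Require Import all_boot all_order all_algebra.
From mathcomp Require Import reals.
Set Implicit Arguments. Unset Strict Implicit. Unset Printing Implicit Defensive.
Import Order.TTheory GRing.Theory Num.Theory.
Local Open Scope ring_scope.

(* Conventions: periods are the naturals 1..T, items are 'I_N.
   An assignment x : nat -> 'I_N -> R gives x_{s,i} = x s i; only the
   values with 1 <= s <= r_i are meaningful (x_{s,i} := 0 for s > r_i,
   which the definitions below enforce by only summing over s <= r_i). *)

Section CMILS.
Variables (R : realType) (T N : nat) (d : 'I_N -> R) (r : 'I_N -> nat)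
  (K C : nat -> R) (h : 'I_N -> nat -> R).

Definition cmils_instance : Prop :=
  (forall i, 0 < d i) /\
  (forall i, (1 <= r i <= T)%N) /\
  (forall s, (1 <= s <= T)%N -> 0 < K s) /\
  (forall s, (1 <= s <= T)%N -> 0 < C s) /\
  (forall i s, (1 <= s <= r i)%N -> 0 <= h i s) /\
  (forall i s t, (1 <= s)%N -> (s <= t)%N -> (t <= r i)%N -> h i t <= h i s) /\
  (forall i, h i (r i) = 0).

Definition xpre (x : nat -> 'I_N -> R) (a : nat) (i : 'I_N) : R :=
  \sum_(1 <= s < a.+1 | (s <= r i)%N) x s i.

Definition assignment (x : nat -> 'I_N -> R) : Prop :=
  (forall i s, (1 <= s <= r i)%N -> 0 <= x s i <= 1) /\
  (forall i, \sum_(1 <= s < (r i).+1) x s i = 1).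

Definition feasible (x : nat -> 'I_N -> R) (y : nat -> bool) : Prop :=
  assignment x /\
  (forall i s, (1 <= s <= r i)%N -> x s i <= (y s)%:R) /\
  (forall s, (1 <= s <= T)%N ->
     \sum_(i | (s <= r i)%N) x s i * d i <= (y s)%:R * C s).

Definition hcost (x : nat -> 'I_N -> R) : R :=
  \sum_(i : 'I_N) d i * \sum_(1 <= s < (r i).+1) x s i * h i s.

Definition Rab (x : nat -> 'I_N -> R) (a b : nat) : R :=
  \sum_(i : 'I_N | (a < r i <= b)%N)
     Num.max (1 - (5%:R / 2%:R) * xpre x a i) 0 * d i.

Definition capS (y : nat -> bool) (a b : nat) : R :=
  \sum_(a.+1 <= s < b.+1 | y s) C s.

End CMILS.

(* Main.v *)
Require Import Defs.
From HB Require Import structures.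
From mathcomp Require Import all_boot all_order all_algebra.
From mathcomp Require Import reals.
From mathcomp Require Import ring lra zify.
Set Implicit Arguments. Unset Strict Implicit.
Import Order.TTheory GRing.Theory Num.Theory.
Local Open Scope ring_scope.
Section H.
Variable R : realType.

Lemma max_anti (k X Y : R) : 0 <= k -> X <= Y ->
  Num.max (1 - k * Y) 0 <= Num.max (1 - k * X) 0.
Proof.
move=> k0 XY; have h : k * X <= k * Y by rewrite ler_wpM2l.
rewrite !maxEle; case: ifP => h1; case: ifP => h2; lra.
Qed.

Lemma max_bound (k X : R) : 1 - Num.max (1 - k * X) 0 <= k * X.
Proof. rewrite maxEle; case: ifP => h; lra. Qed.

Lemma diff_min (c Q P : R) : 0 <= P ->
  0 <= Num.min c (Q + P) - Num.min c Q <= P.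
Proof. move=> hP; rewrite !minEle; case: ifP => h1; case: ifP => h2; apply/andP; split; lra. Qed.

Lemma tele (g : nat -> R) (a t : nat) : (a <= t)%N ->
  \sum_(a.+1 <= i < t.+1) (g i.-1 - g i) = g a - g t.
Proof.
elim: t => [|t IH] h.
  have -> : a = 0%N by lia.
  by rewrite big_geq // subrr.
case: (ltnP a t.+1) => h2.
  rewrite big_nat_recr //= IH; [lra | lia].
have -> : a = t.+1 by lia.
by rewrite big_geq // subrr.
Qed.

Lemma abel (w H : nat -> R) (m : nat) :
  \sum_(1 <= a < m.+1) w a * H a =
  \sum_(1 <= t < m) (H t - H t.+1) * (\sum_(1 <= a < t.+1) w a)
  + (\sum_(1 <= a < m.+1) w a) * H m.
Proof.
elim: m => [|m IH]; first by rewrite !big_geq // mul0r addr0.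
case: m IH => [|m] IH.
  by rewrite big_nat1 big_geq // add0r big_nat1.
rewrite big_nat_recr // IH [in RHS]big_nat_recr // [X in _ = _ + X * _]big_nat_recr //=.
set S1 := \sum_(1 <= t < m.+1) _. set W := \sum_(1 <= a < m.+2) w a.
ring.
Qed.


Lemma edf (J : finType) (A : pred J) (p : J -> R) (dl : J -> nat) (c : R) :
  0 <= c -> (forall j, 0 <= p j) ->
  exists u : J -> R, (forall j, 0 <= u j <= p j) /\ (forall j, ~~ A j -> u j = 0) /\
    \sum_j u j <= c /\
    forall b, (\sum_(j | (dl j < b)%N) u j = c) \/
              (forall j, A j -> (dl j < b)%N -> u j = p j).
Proof.
move=> c0 p0.
pose Q t := \sum_(j | A j && (dl j < t)%N) p j.
pose P t := \sum_(j | A j && (dl j == t)) p j.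
pose f t := Num.min c (Q t).
pose u j := if A j then p j * ((f (dl j).+1 - f (dl j)) / P (dl j)) else 0.
have QS t : Q t.+1 = Q t + P t.
  rewrite /Q (bigID (fun j => (dl j < t)%N)) /=; congr (_ + _); apply: eq_bigl => j;
  case: (A j) => //=; lia.
have P0 t : 0 <= P t by apply: sumr_ge0.
have D0 t : 0 <= f t.+1 - f t <= P t by rewrite /f QS; apply: diff_min.
have frac t : 0 <= (f t.+1 - f t) / P t <= 1.
  have /andP[d1 d2] := D0 t.
  have [->|Pn] := eqVneq (P t) 0; first by rewrite invr0 mulr0 lexx ler01.
  have Pp : 0 < P t by rewrite lt0r Pn P0.
  by rewrite divr_ge0 //= ler_pdivrMr // mul1r.
have key t : \sum_(j | (dl j < t)%N) u j = f t.
  elim: t => [|t IH].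
    rewrite big_pred0 => [|j]; last by rewrite ltn0.
    rewrite /f /Q big_pred0 => [|j]; last by rewrite ltn0 andbF.
    by rewrite minEle; case: ifP => h; [apply/eqP; rewrite eq_le h c0|].
  rewrite (bigID (fun j => (dl j < t)%N)) /=.
  rewrite (eq_bigl (fun j => (dl j < t)%N)); last by move=> j; lia.
  rewrite IH (eq_bigl (fun j => dl j == t)); last by move=> j; lia.
  rewrite (eq_bigr (fun j => if A j then p j * ((f t.+1 - f t) / P t) else 0)); last first.
    by move=> j /eqP E; rewrite /u E.
  rewrite -big_mkcondr -mulr_suml (eq_bigl (fun j => A j && (dl j == t))); last first.
    by move=> j; rewrite andbC.
  rewrite -/(P t).
  have /andP[d1 d2] := D0 t.
  have [E|Pn] := eqVneq (P t) 0.
    rewrite E mul0r addr0; apply/eqP; rewrite eq_sym -subr_eq0; apply/eqP.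
    apply/eqP; rewrite eq_le d1 andbT; by rewrite -E.
  by field.
exists u; split; [|split; [|split]].
- move=> j; rewrite /u; case: ifP => _; last by rewrite lexx p0.
  have /andP[h1 h2] := frac (dl j).
  by rewrite mulr_ge0 //= ler_piMr.
- by move=> j /negbTE h; rewrite /u h.
- pose M := (\max_j dl j).+1.
  rewrite (eq_bigl (fun j => (dl j < M)%N)); last first.
    by move=> j; rewrite /M ltnS leq_bigmax.
  rewrite key /f minEle; case: ifP => h //.
  by move/negbT: h; rewrite -ltNge => /ltW.
- move=> b; have := key b; rewrite /f minEle; case: ifP => h E; first by left.
  right.
  have S0 : \sum_(j | A j && (dl j < b)%N) (p j - u j) = 0.
    rewrite sumrB -/(Q b) -E; apply/eqP; rewrite subr_eq0; apply/eqP.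
    rewrite big_mkcond [RHS]big_mkcond /=; apply: eq_bigr => j _.
    case: (boolP (A j)) => hA //=; by rewrite /u (negbTE hA); case: ifP.
  have NN : forall i, A i && (dl i < b)%N -> 0 <= p i - u i.
    move=> i _; rewrite subr_ge0; rewrite /u; case: ifP => _; last by [].
    have /andP[h1 h2] := frac (dl i); by rewrite ler_piMr.
  have S1 := psumr_eq0P NN S0.
  move=> j hA hb; have := S1 j; rewrite hA hb => /(_ isT) /eqP.
  by rewrite subr_eq0 => /eqP.
Qed.


Lemma drop_zero (J : finType) (Pr : pred J) (p : J -> R) (rl : J -> nat) lo :
  (forall j, p j != 0 -> (lo < rl j)%N) ->
  \sum_(j | Pr j) p j = \sum_(j | Pr j && (lo < rl j)%N) p j.
Proof.
move=> Hp; rewrite [RHS]big_mkcondr; apply: eq_bigr => j _.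
case: ifP => // h; case: (eqVneq (p j) 0) => // /Hp h1; by rewrite h1 in h.
Qed.

Lemma sched (J : finType) (dl : J -> nat) (c : nat -> R) (Hc : forall s, 0 <= c s) :
 forall n lo (p : J -> R) (rl : J -> nat),
 (forall j, 0 <= p j) ->
 (forall j, p j != 0 -> [&& (lo < rl j)%N, (rl j <= dl j)%N & (dl j <= lo + n)%N]) ->
 (forall a b, (lo <= a)%N -> (a < b)%N -> (b <= lo + n)%N ->
    \sum_(j | (a < rl j)%N && (dl j <= b)%N) p j <= \sum_(a.+1 <= s < b.+1) c s) ->
 exists z : nat -> J -> R,
   (forall s j, 0 <= z s j <= p j) /\
   (forall s j, z s j != 0 ->
      [&& (lo < s)%N, (s <= lo + n)%N, (rl j <= s)%N, (s <= dl j)%N & p j != 0]) /\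
   (forall j, \sum_(lo.+1 <= s < (lo + n).+1) z s j = p j) /\
   (forall s, \sum_j z s j <= c s).
Proof.
elim=> [|n IH] lo p rl p0 Hp Hall.
  exists (fun _ _ => 0); split; [|split; [|split]].
  - by move=> s j; rewrite lexx p0.
  - by move=> s j; rewrite eqxx.
  - move=> j; rewrite addn0 big_geq //; case: (eqVneq (p j) 0) => // /Hp.
    move=> /and3P[h1 h2 h3]; lia.
  - by move=> s; rewrite big1.
have [u [ub [uA [usum udis]]]] := @edf J (fun j => (rl j <= lo.+1)%N) p dl (c lo.+1) (Hc lo.+1) p0.
pose p' j := p j - u j.
pose rl' j := maxn (rl j) lo.+2.
have p'0 j : 0 <= p' j by have /andP[_ h] := ub j; rewrite /p' subr_ge0.
have p'le j : p' j <= p j by have /andP[h _] := ub j; rewrite /p' lerBlDr lerDl.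
have pz j : p j = 0 -> u j = 0.
  by move=> E; have /andP[h1 h2] := ub j; apply/eqP; rewrite eq_le h1 -E h2.
have p'nz j : p' j != 0 -> p j != 0.
  by apply: contraNN => /eqP E; rewrite /p' E (pz j E) subrr.
have Hplo j : p j != 0 -> (lo < rl j)%N by move=> /Hp /and3P[].
have Hall0 b : (lo < b)%N -> (b <= lo + n.+1)%N ->
    \sum_(j | (dl j <= b)%N) p j <= \sum_(lo.+1 <= s < b.+1) c s.
  move=> h1 h2; rewrite (@drop_zero J (fun j => (dl j <= b)%N) p rl lo Hplo) (eq_bigl (fun j => (lo < rl j)%N && (dl j <= b)%N)).
    by apply: Hall.
  by move=> j; rewrite andbC.
have dlfin j : dl j = lo.+1 -> p' j = 0.
  move=> Ej; case: (udis lo.+2) => [E|E].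
    have S : \sum_(j | (dl j < lo.+2)%N) p' j = 0.
      apply/eqP; rewrite eq_le sumr_ge0 // andbT /p' sumrB E subr_le0.
      by have := Hall0 lo.+1 (ltnSn lo) ltac:(lia); rewrite big_nat1.
    by apply: (psumr_eq0P (fun i _ => p'0 i) S); rewrite Ej.
  case: (eqVneq (p j) 0) => [E0|/Hp /and3P[h1 h2 h3]].
    by rewrite /p' E0 (pz j E0) subrr.
  by rewrite /p' E //= ?Ej ?subrr //; lia.
have [z' [z'b [z'sup [z'sum z'cap]]]] : exists z : nat -> J -> R,
   (forall s j, 0 <= z s j <= p' j) /\
   (forall s j, z s j != 0 ->
      [&& (lo.+1 < s)%N, (s <= lo.+1 + n)%N, (rl' j <= s)%N, (s <= dl j)%N & p' j != 0]) /\
   (forall j, \sum_(lo.+2 <= s < (lo.+1 + n).+1) z s j = p' j) /\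
   (forall s, \sum_j z s j <= c s).
  apply: IH => //.
  - move=> j hj; have /Hp/and3P[h1 h2 h3] := p'nz j hj.
    have h4 : dl j != lo.+1 by apply/eqP => /dlfin; apply/eqP.
    rewrite /rl'; apply/and3P; split; lia.
  - move=> a b h1 h2 h3.
    case: (ltnP lo.+1 a) => ha.
      rewrite (eq_bigl (fun j => (a < rl j)%N && (dl j <= b)%N)); last first.
        by move=> j; rewrite /rl'; congr (_ && _); lia.
      apply: le_trans (Hall a b _ h2 _); [|lia|lia].
      by apply: ler_sum => j _.
    have Ea : a = lo.+1 by lia.
    subst a.
    rewrite (eq_bigl (fun j => (dl j <= b)%N)); last first.
      by move=> j; rewrite /rl' /=; lia.
    case: (udis b.+1) => [E|E].
      rewrite /p' sumrB E.
      have H := Hall0 b ltac:(lia) ltac:(lia).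
      rewrite big_ltn in H; last by lia.
      lra.
    apply: (@le_trans _ _ (\sum_(j | (dl j <= b)%N) (if (lo.+1 < rl j)%N then p j else 0))).
      apply: ler_sum => j hj; case: ifP => h; first by [].
      rewrite /p' E //; [by rewrite subrr | lia].
    rewrite -big_mkcondr (eq_bigl (fun j => (lo.+1 < rl j)%N && (dl j <= b)%N)).
      by apply: Hall; lia.
    by move=> j; rewrite andbC.
exists (fun s j => if s == lo.+1 then u j else z' s j); split; [|split; [|split]].
- move=> s j; case: ifP => _; first exact: ub.
  have /andP[h1 h2] := z'b s j; rewrite h1 /=; exact: le_trans h2 (p'le j).
- move=> s j; case: ifP => [/eqP -> hu|hs hz].
    have hA : (rl j <= lo.+1)%N.
      by apply: contraNT hu => /uA ->; rewrite eqxx.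
    have pnz : p j != 0 by apply: contraNN hu => /eqP /pz ->.
    have /and3P[h1 h2 h3] := Hp j pnz.
    apply/and5P; split => //; lia.
  have /and5P[h1 h2 h3 h4 h5] := z'sup s j hz.
  have h6 := p'nz j h5.
  apply/and5P; split => //; rewrite /rl' in h3; lia.
- move=> j; rewrite big_ltn; last by lia.
  rewrite eqxx (eq_big_nat _ _ (F2 := fun s => z' s j)); last first.
    by move=> s hs; case: ifP => // /eqP E; lia.
  have -> : (lo + n.+1).+1 = (lo.+1 + n).+1 by lia.
  by rewrite z'sum /p' addrC subrK.
- move=> s; case: (eqVneq s lo.+1) => [->|hs].
    rewrite (eq_bigr (fun j => u j)); first exact: usum.
    by [].
  rewrite (eq_bigr (fun j => z' s j)); first exact: z'cap.
  by [].
Qed.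


Lemma ordsum (m lo r : nat) (g : nat -> R) : (r < m)%N ->
  \sum_(a < m) (if (lo < a <= r)%N then g a else 0) = \sum_(lo.+1 <= a < r.+1) g a.
Proof.
move=> hm; rewrite -(big_mkord xpredT (fun a => if (lo < a <= r)%N then g a else 0)).
have Z : forall u v, (forall a, (u <= a < v)%N -> ~~ (lo < a <= r)%N) ->
    \sum_(u <= a < v) (if (lo < a <= r)%N then g a else 0) = 0.
  move=> u v Hu; rewrite big_nat_cond big1 // => a /andP[ha _]; by rewrite ifN // Hu.
case: (leqP lo r) => h.
  have H1 : (r.+1 <= m)%N by lia.
  have H2 : (lo.+1 <= r.+1)%N by lia.
  rewrite (@big_cat_nat _ _ _ r.+1) //= [X in _ + X]Z ?addr0; last first.
    by move=> a /andP[? ?]; apply/negP => /andP[? ?]; lia.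
  rewrite (@big_cat_nat _ _ _ lo.+1) //= [X in X + _]Z ?add0r; last first.
    by move=> a /andP[? ?]; apply/negP => /andP[? ?]; lia.
  by apply: eq_big_nat => a ha; rewrite ifT //; lia.
rewrite [RHS]big_geq; last by lia.
by rewrite Z // => a _; apply/negP => /andP[? ?]; lia.
Qed.

Lemma sub_sum (I : finType) (P : pred I) (F : I -> R) :
  (forall i, 0 <= F i) -> \sum_(i | P i) F i <= \sum_i F i.
Proof.
move=> F0; rewrite [X in _ <= X](bigID P) /= lerDl; exact: sumr_ge0.
Qed.

End H.

Unset Implicit Arguments.

Theorem lemma1 (R : realType) (T N : nat) (d : 'I_N -> R) (r : 'I_N -> nat)
  (K C : nat -> R) (h : 'I_N -> nat -> R)
  (Hinst : cmils_instance T d r K C h)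
  (x : nat -> 'I_N -> R) (Hx : assignment r x)
  (ystar : nat -> bool)
  (Hcap : forall a b : nat, (a < b <= T)%N ->
     capS C ystar a b >= Rab d r x a b) :
  exists xstar : nat -> 'I_N -> R,
    feasible T d r C xstar ystar /\
    hcost d r h xstar <= (5%:R / 2%:R) * hcost d r h x.
Proof.
case: Hinst => [d0 [rT [_ [C0 [_ [hmono hr]]]]]].
case: Hx => [x01 x1].
have k0 : (0 : R) <= 5%:R / 2%:R by rewrite divr_ge0 // ler0n.
have k1 : (1 : R) < 5%:R / 2%:R.
  by rewrite ltr_pdivlMr ?ltr0n // mul1r ltr_nat.
pose X a i := xpre r x a i.
pose q i a := Num.max (1 - (5%:R / 2%:R) * X a i) 0.
have Xstep a i : X a.+1 i = X a i + (if (a.+1 <= r i)%N then x a.+1 i else 0).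
  by rewrite /X /xpre big_mkcond big_nat_recr //= [in X in _ = X + _]big_mkcond.
have Xmono a i : X a i <= X a.+1 i.
  rewrite Xstep lerDl; case: ifP => hh //.
  by have /andP[] := x01 i a.+1 ltac:(apply/andP; split; lia).
have qstep a i : 0 <= q i a - q i a.+1.
  by rewrite subr_ge0; apply: max_anti.
have X0 i : X 0%N i = 0 by rewrite /X /xpre big_geq.
have q0 i : q i 0%N = 1.
  by rewrite /q X0 mulr0 subr0 maxEle ler10.
have Xeq t i : (t <= r i)%N -> X t i = \sum_(1 <= s < t.+1) x s i.
  move=> ht; rewrite /X /xpre big_mkcond; apply: eq_big_nat => s hs.
  by rewrite ifT //; lia.
have qr i : q i (r i) = 0.
  rewrite /q Xeq // x1 mulr1 maxEle; case: ifP => hh //; lra.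
pose p (j : 'I_N * 'I_T.+1) := if (1 <= j.2 <= r j.1)%N then (q j.1 (j.2).-1 - q j.1 j.2) * d j.1 else 0.
pose c s := if (1 <= s <= T)%N && ystar s then C s else 0.
have Hc s : 0 <= c s.
  rewrite /c; case: ifP => [/andP[hs _]|_] //; exact: ltW (C0 s hs).
have p0 (j : 'I_N * 'I_T.+1) : 0 <= p j.
  rewrite /p; case: ifP => [/andP[h1 h2]|_] //.
  apply: mulr_ge0; last exact: ltW.
  have := qstep (j.2).-1 j.1; by rewrite prednK.
have Hp (j : 'I_N * 'I_T.+1) : p j != 0 -> [&& (0 < j.2)%N, (j.2 <= r j.1)%N & (r j.1 <= 0 + T)%N].
  rewrite /p; case: ifP => [/andP[h1 h2]|]; last by rewrite eqxx.
  move=> _; have /andP[_ h3] := rT j.1; by rewrite h1 h2 add0n h3.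
have Hall a b : (0 <= a)%N -> (a < b)%N -> (b <= 0 + T)%N ->
    \sum_(j : 'I_N * 'I_T.+1 | (a < j.2)%N && (r j.1 <= b)%N) p j <= \sum_(a.+1 <= s < b.+1) c s.
  move=> _ hab hbT; rewrite add0n in hbT.
  have -> : \sum_(a.+1 <= s < b.+1) c s = capS C ystar a b.
    rewrite /capS [RHS]big_mkcond; apply: eq_big_nat => s hs.
    have hsT : (1 <= s <= T)%N by apply/andP; split; lia.
    by rewrite /c hsT.
  apply: le_trans (Hcap a b _); last by rewrite hab hbT.
  rewrite le_eqVlt; apply/orP; left; apply/eqP.
  rewrite (eq_bigl (fun j : 'I_N * 'I_T.+1 => predT j.1 && ((a < j.2)%N && (r j.1 <= b)%N))) //.
  rewrite -(pair_big_dep predT (fun i (a' : 'I_T.+1) => (a < a')%N && (r i <= b)%N)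
          (fun i a' => p (i, a'))) /=.
  rewrite /Rab [RHS]big_mkcond /=; apply: eq_bigr => i _.
  case hb: (r i <= b)%N; last first.
    by rewrite andbF big_pred0 // => a'; rewrite andbF.
  rewrite andbT.
  rewrite (eq_bigl (fun a' : 'I_T.+1 => (a < a')%N)); last by move=> a'; rewrite andbT.
  rewrite big_mkcond /=.
  rewrite (eq_bigr (fun a' : 'I_T.+1 => if (a < a' <= r i)%N then (q i (nat_of_ord a').-1 - q i a') * d i else 0)); last first.
    move=> a' _; rewrite /p /=; case: (ltnP a a') => ha //=.
    by have -> : (1 <= a')%N = true by lia.
  have ri : (r i < T.+1)%N by have /andP[_ h3] := rT i; lia.
  rewrite (@ordsum R T.+1 a (r i) (fun a' => (q i a'.-1 - q i a') * d i)) // -mulr_suml.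
  case: (ltnP a (r i)) => hai.
    by rewrite tele ?(ltnW hai) // qr subr0.
  by rewrite big_geq ?mul0r //; lia.
have [z [zb [zsup [zsum zcap]]]] :=
  @sched R _ (fun j : 'I_N * 'I_T.+1 => r j.1) c Hc T 0%N p
     (fun j : 'I_N * 'I_T.+1 => nat_of_ord j.2) p0 Hp Hall.
have zsumi (j : 'I_N * 'I_T.+1) : \sum_(1 <= s < (r j.1).+1) z s j = p j.
  rewrite -(zsum j) add0n.
  have /andP[h1 h2] := rT j.1.
  have h4 : (1 <= (r j.1).+1)%N by lia.
  have h5 : ((r j.1).+1 <= T.+1)%N by lia.
  rewrite [RHS](@big_cat_nat _ _ _ (r j.1).+1) //=.
  have Z : \sum_((r j.1).+1 <= s < T.+1) z s j = 0.
    rewrite big_nat_cond big1 // => s /andP[/andP[hs1 hs2] _].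
    apply/eqP; apply: contraT => nz; have /and5P[_ _ _ hh _] := zsup s j nz; lia.
  by rewrite Z addr0.
have psum i : \sum_(a < T.+1) p (i, a) = d i.
  have ri : (r i < T.+1)%N by have /andP[_ h3] := rT i; lia.
  rewrite (@ordsum R T.+1 0 (r i) (fun a' => (q i a'.-1 - q i a') * d i)) // -mulr_suml.
  by rewrite tele // q0 qr subr0 mul1r.
pose xs s i := (\sum_(a < T.+1) z s (i, a)) / d i.
have dnz i : d i != 0 by rewrite gt_eqF.
have xs0 s i : 0 <= xs s i.
  rewrite /xs; apply: divr_ge0; last exact: ltW.
  apply: sumr_ge0 => a _; by have /andP[] := zb s (i, a).
have xs1 s i : xs s i <= 1.
  rewrite /xs ler_pdivrMr // mul1r -[X in _ <= X]psum; apply: ler_sum => a _.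
  by have /andP[] := zb s (i, a).
have xssum i : \sum_(1 <= s < (r i).+1) xs s i = 1.
  rewrite /xs -mulr_suml exchange_big /=.
  rewrite (eq_bigr (fun a => p (i, a))); last by move=> a _; rewrite (zsumi (i, a)).
  by rewrite psum divff.
have zoff s : (1 <= s <= T)%N -> ystar s = false -> forall j, z s j = 0.
  move=> hs hy j.
  have hc : c s = 0 by rewrite /c hy andbF.
  have S0 : \sum_j z s j = 0.
    apply: le_anti; apply/andP; split; first by apply: le_trans (zcap s) _; rewrite hc.
    apply: sumr_ge0 => k _; by have /andP[] := zb s k.
  have NN : forall k, true -> 0 <= z s k by move=> k _; have /andP[] := zb s k.
  exact: (psumr_eq0P NN S0).
exists xs; split; [split; [split|split]|].
- by move=> i s hs; rewrite xs0 xs1.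
- exact: xssum.
- move=> i s /andP[h1 h2]; case hy: (ystar s); first exact: xs1.
  have hsT : (1 <= s <= T)%N by have /andP[_ h3] := rT i; apply/andP; split; lia.
  rewrite /xs big1 ?mul0r // => a _; exact: zoff.
- move=> s hs.
  rewrite (eq_bigr (fun i => \sum_(a < T.+1) z s (i, a))); last first.
    by move=> i _; rewrite /xs divfK.
  apply: le_trans (sub_sum _ _) _.
    by move=> i; apply: sumr_ge0 => a _; have /andP[] := zb s (i, a).
  rewrite pair_bigA /=.
  rewrite (eq_bigr (fun j => z s j)); last by move=> [i a] _.
  apply: le_trans (zcap s) _.
  by rewrite /c hs /=; case: (ystar s); rewrite ?mul1r ?mul0r.
rewrite /hcost mulr_sumr; apply: ler_sum => i _.
have ri : (r i < T.+1)%N by have /andP[_ h3] := rT i; lia.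
have LHS : d i * \sum_(1 <= s < (r i).+1) xs s i * h i s =
    \sum_(1 <= s < (r i).+1) \sum_(a < T.+1) z s (i, a) * h i s.
  rewrite mulr_sumr; apply: eq_big_nat => s _; rewrite -mulr_suml /xs.
  by field; exact: dnz i.
rewrite LHS.
apply: (@le_trans _ _ (\sum_(1 <= s < (r i).+1) \sum_(a < T.+1) z s (i, a) * h i a)).
  apply: ler_sum_nat => s hs; apply: ler_sum => a _.
  case: (eqVneq (z s (i, a)) 0) => [->|nz]; first by rewrite !mul0r.
  have /and5P[h1 h2 h3 h4 h5] := zsup s (i, a) nz.
  have ha : (1 <= a)%N.
    by move: h5; rewrite /p /=; case: ifP => [/andP[]//|_]; rewrite eqxx.
  apply: ler_wpM2l; first by have /andP[] := zb s (i, a).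
  exact: hmono.
rewrite exchange_big /=.
rewrite (eq_bigr (fun a => p (i, a) * h i a)); last first.
  by move=> a _; rewrite -mulr_suml (zsumi (i, a)).
rewrite (eq_bigr (fun a : 'I_T.+1 => if (0 < a <= r i)%N
     then (q i (nat_of_ord a).-1 - q i a) * d i * h i a else 0)); last first.
  by move=> a _; rewrite /p /=; case: ifP => //; rewrite mul0r.
rewrite (@ordsum R T.+1 0 (r i) (fun a' => (q i a'.-1 - q i a') * d i * h i a')) //.
rewrite (eq_bigr (fun a => d i * ((q i a.-1 - q i a) * h i a))); last first.
  by move=> a _; ring.
rewrite -mulr_sumr mulrCA; apply: ler_wpM2l; first exact: ltW.
rewrite (abel (fun a => q i a.-1 - q i a) (h i) (r i)).
rewrite (abel (fun s => x s i) (h i) (r i)) hr !mulr0 !addr0.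
rewrite mulr_sumr; apply: ler_sum_nat => t ht.
rewrite (@tele R (q i) 0 t) // q0 -Xeq; last by lia.
rewrite mulrCA; apply: ler_wpM2l.
  rewrite subr_ge0; apply: hmono; lia.
exact: max_bound.
Qed.
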